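(* Let $d=p$ be any prime with $p\equiv 3\pmod 4$, let $x_0=-2-\sqrt{d+1}$ (with $\sqrt{d+1}>0$), and let $\sqrt{x_0}$ be a purely imaginary square root of $x_0$. Then there exists $x_1\in\mathbb{C}$ with $|x_1|=1$ such that the vector $|\mathbf v\rangle\in\mathbb{C}^d$ with components $v_0=\sqrt{x_0}$, $v_j=x_1$ for $j$ a nonzero quadratic residue mod $d$, and $v_j=-1/x_1$ for $j$ a quadratic nonresidue mod $d$, satisfies $$\langle\mathbf v|X^{-2j}|\mathbf v\rangle=(\sqrt{d+1}+1)\,v_j^2\qquad\text{for all } j\not\equiv 0\pmod d,$$ where $X$ is the cyclic shift $X|r\rangle=|r+1\rangle$, so that $\langle\mathbf v|X^{-2j}|\mathbf v\rangle=\sum_{k=0}^{d-1}v_k^*v_{k+2j}$.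
   Context: Indices are taken modulo $d$ and $^*$ denotes complex conjugation. Such a vector is called a Legendre vector; the displayed identity is called the $X$-overlap equation. *)

(* Defs.v *)
From HB Require Import structures.
From mathcomp Require Import all_boot all_order all_algebra.
From mathcomp Require Import reals.
From mathcomp Require Import complex.
Set Implicit Arguments. Unset Strict Implicit. Unset Printing Implicit Defensive.
Import Order.TTheory GRing.Theory Num.Theory.
Local Open Scope ring_scope.

Definition qres (p j : nat) : bool :=
  (j %% p != 0)%N && [exists x : 'I_p, (x * x == j %[mod p])%N].

Definition addmod (p : nat) (k : 'I_p) (m : nat) : 'I_p :=
  @Ordinal p ((k + m) %% p)%N (ltn_pmod _ (leq_ltn_trans (leq0n k) (ltn_ord k))).

Definition overlap (C : numClosedFieldType) (p : nat) (v : 'I_p -> C) (j : nat) : C :=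
  \sum_(k < p) (v k)^* * v (addmod k (2 * j)).

(* Main.v *)
Require Import Defs.
From HB Require Import structures.
From mathcomp Require Import all_boot all_order all_algebra all_field.
From mathcomp Require Import reals.
From mathcomp Require Import complex.
From mathcomp Require Import ring lra zify.
Set Implicit Arguments. Unset Strict Implicit.
Import Order.TTheory GRing.Theory Num.Theory.
Local Open Scope ring_scope.
Lemma natF_eq (p : nat) (hp : prime p) (a b : nat) :
  (a%:R == b%:R :> 'F_p) = (a == b %[mod p])%N.
Proof.
apply/eqP/eqP => [h|h].
  by rewrite -(val_Fp_nat hp) h val_Fp_nat.
by rewrite -(Fp_nat_mod hp a) h Fp_nat_mod.
Qed.

Lemma p_odd_facts (p : nat) (hp4 : (p %% 4 = 3)%N) :
  [/\ (2 * (p.-1)./2 = p.-1)%N, odd (p.-1)./2, (0 < (p.-1)./2)%N & (2 < p)%N].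
Proof.
have ep := divn_eq p 4; rewrite hp4 in ep.
move: (p %/ 4)%N ep => q ep.
have e1 : p.-1 = (q * 4 + 2)%N by rewrite ep; lia.
have e2 : ((q * 4 + 2)./2 = (2 * q).+1)%N.
  by rewrite (_ : (q * 4 + 2 = (2 * q).+1.*2)%N) ?doubleK // -muln2; lia.
rewrite e1 e2; split; try lia; by rewrite /= odd_mul.
Qed.

Lemma Fp_fermat (p : nat) (hp : prime p) (x : 'F_p) : x != 0 -> x ^+ p.-1 = 1.
Proof.
move=> x0; have := expf_card x; rewrite card_Fp //.
move=> h; apply: (mulfI x0); rewrite mulr1 -exprS prednK ?prime_gt0 //.
Qed.

Lemma euler_pm (p : nat) (hp : prime p) (hp4 : (p %% 4 = 3)%N) (x : 'F_p) :
  x != 0 -> x ^+ (p.-1)./2 = 1 \/ x ^+ (p.-1)./2 = -1.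
Proof.
move=> x0; have [e2 _ _ _] := p_odd_facts hp4.
have : (x ^+ (p.-1)./2) ^+ 2 == 1.
  by rewrite -exprM mulnC e2 Fp_fermat.
by rewrite sqrf_eq1 => /orP [/eqP -> | /eqP ->]; [left|right].
Qed.

Lemma sq_euler (p : nat) (hp : prime p) (hp4 : (p %% 4 = 3)%N) (y : 'F_p) :
  y != 0 -> (y * y) ^+ (p.-1)./2 = 1.
Proof.
move=> y0; have [e2 _ _ _] := p_odd_facts hp4.
by rewrite -expr2 -exprM e2 Fp_fermat.
Qed.

Lemma natF_neq0 (p : nat) (hp : prime p) (k : nat) :
  (0 < k < p)%N -> (k%:R : 'F_p) != 0.
Proof.
move=> /andP [k0 kp]; rewrite -(dvdn_pcharf (pchar_Fp hp)).
apply/negP => /(dvdn_leq k0); rewrite leqNgt kp //.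
Qed.

Lemma euler_sq (p : nat) (hp : prime p) (hp4 : (p %% 4 = 3)%N) (x : 'F_p) :
  x ^+ (p.-1)./2 = 1 -> exists y, y * y = x.
Proof.
move=> hx; have [e2 hodd h0 p2] := p_odd_facts hp4.
set h := (p.-1)./2 in e2 hodd h0 hx *.
set rs := [seq ((i.+1)%:R : 'F_p) ^+ 2 | i <- iota 0 h].
set P : {poly 'F_p} := 'X^h - 1.
have sP : size P = h.+1 by rewrite size_Xn_sub_1.
have P0 : P != 0 by rewrite -size_poly_eq0 sP.
have hlt : forall i, (i < h)%N -> (0 < i.+1 < p)%N.
  move=> i ih; apply/andP; split => //; lia.
have rootsq : forall z : 'F_p, z != 0 -> root P (z ^+ 2).
  by move=> z z0; rewrite /root /P !hornerE expr2 sq_euler // subrr.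
have allr : all (root P) rs.
  apply/allP => z zin; case/mapP: zin => i; rewrite mem_iota add0n => /andP [_ ih] ->.
  by apply: rootsq; apply: natF_neq0 => //; apply: hlt.
have urs : uniq rs.
  rewrite map_inj_in_uniq ?iota_uniq // => i j; rewrite !mem_iota !add0n.
  move=> /andP [_ ih] /andP [_ jh] /eqP; rewrite eqf_sqr => /orP [/eqP|/eqP].
    move/eqP; rewrite natF_eq // => /eqP H.
    have := hlt i ih; have := hlt j jh => /andP [_ hj] /andP [_ hi].
    by move: H; rewrite (modn_small hi) (modn_small hj) => -[].
  move/eqP; rewrite -subr_eq0 opprK -natrD => /eqP /eqP; apply: contraTeq => _.
  by apply: natF_neq0 => //; lia.
case: (boolP (x \in rs)) => [/mapP [k _ ->]|xn]; first by exists (k.+1)%:R; rewrite expr2.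
have : (size (x :: rs) < size P)%N.
  apply: max_poly_roots => //=.
    by rewrite allr andbT /root /P !hornerE hx subrr.
  by rewrite xn urs.
by rewrite /= sP size_map size_iota ltnn.
Qed.

Lemma qres_F (p : nat) (hp : prime p) (hp4 : (p %% 4 = 3)%N) (k : nat) :
  qres p k = ((k%:R : 'F_p) != 0) && ((k%:R : 'F_p) ^+ (p.-1)./2 == 1).
Proof.
rewrite /qres.
have -> : (k %% p != 0)%N = ((k%:R:'F_p) != 0).
  by rewrite -(dvdn_pcharf (pchar_Fp hp)) /dvdn.
case: (boolP ((k%:R : 'F_p) != 0)) => //= k0.
apply/existsP/eqP.
- case=> x /eqP hx.
  have hxx : ((x * x)%:R : 'F_p) = k%:R by apply/eqP; rewrite natF_eq //; apply/eqP.
  rewrite -hxx natrM; apply: sq_euler => //.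
  apply: contraNneq k0 => x0; by rewrite -hxx natrM x0 mul0r.
- move/(euler_sq hp hp4) => [y hy].
  have lty : (val y < p)%N by rewrite -[X in (_ < X)%N](Fp_cast hp) ltn_ord.
  exists (Ordinal lty); rewrite /= -(natF_eq hp) natrM.
  by rewrite natr_Zp hy.
Qed.

Definition chiF (R : realType) (p : nat) (x : 'F_p) : R[i] :=
  if x == 0 then 0 else if x ^+ (p.-1)./2 == 1 then 1 else -1.

Lemma Fp_m1_neq1 (p : nat) (hp : prime p) (hp4 : (p %% 4 = 3)%N) : (-1 : 'F_p) != 1.
Proof.
have [_ _ _ p2] := p_odd_facts hp4.
rewrite eq_sym -subr_eq0 opprK (_ : 1 + 1 = 2%:R) //.
by apply: natF_neq0 => //; lia.
Qed.

Lemma chiF_mul (R : realType) (p : nat) (hp : prime p) (hp4 : (p %% 4 = 3)%N)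
  (x y : 'F_p) : chiF R (x * y) = chiF R x * chiF R y.
Proof.
rewrite /chiF mulf_eq0.
case: (boolP (x == 0)) => x0 /=; first by rewrite mul0r.
case: (boolP (y == 0)) => y0 /=; first by rewrite mulr0.
have n11 := Fp_m1_neq1 hp hp4.
rewrite exprMn.
by case: (euler_pm hp hp4 x0) => ->; case: (euler_pm hp hp4 y0) => ->;
  rewrite ?mulr1 ?mul1r ?mulrNN ?mulr1 ?eqxx ?(negPf n11) ?mulrN1 ?mulN1r ?opprK.
Qed.

Lemma chiF_m1 (R : realType) (p : nat) (hp : prime p) (hp4 : (p %% 4 = 3)%N) :
  chiF R (-1 : 'F_p) = -1.
Proof.
have [_ hodd _ _] := p_odd_facts hp4.
rewrite /chiF oppr_eq0 oner_eq0 -signr_odd hodd expr1.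
by rewrite (negPf (Fp_m1_neq1 hp hp4)).
Qed.

Lemma chiF0 (R : realType) (p : nat) : chiF R (0 : 'F_p) = 0.
Proof. by rewrite /chiF eqxx. Qed.

Lemma chiF1 (R : realType) (p : nat) (hp : prime p) : chiF R (1 : 'F_p) = 1.
Proof. by rewrite /chiF oner_eq0 expr1n eqxx. Qed.

Lemma chiF_sq (R : realType) (p : nat) (x : 'F_p) : x != 0 -> chiF R x * chiF R x = 1.
Proof. by rewrite /chiF => /negPf ->; case: ifP => _; rewrite ?mulr1 ?mulrNN ?mulr1. Qed.

Lemma chiF_conj (R : realType) (p : nat) (x : 'F_p) : (chiF R x)^* = chiF R x.
Proof. by rewrite /chiF; case: ifP => _; [|case: ifP => _]; rewrite ?rmorph0 ?rmorphN ?rmorph1. Qed.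

Lemma sum_chiF (R : realType) (p : nat) (hp : prime p) (hp4 : (p %% 4 = 3)%N) :
  \sum_(x : 'F_p) chiF R x = 0.
Proof.
set S := \sum_(x : 'F_p) _.
have eS : S = - S.
  rewrite {1}/S (reindex_inj (@oppr_inj _)) /= -sumrN; apply: eq_bigr => x _.
  by rewrite -mulN1r chiF_mul // chiF_m1 // mulN1r.
have : S *+ 2 = 0 by rewrite mulr2n {1}eS addNr.
by move/eqP; rewrite -mulr_natl mulf_eq0 pnatr_eq0 /= => /eqP.
Qed.

Lemma sum_chiF_shift (R : realType) (p : nat) (hp : prime p) (hp4 : (p %% 4 = 3)%N)
  (m : 'F_p) : m != 0 -> \sum_(x : 'F_p) chiF R x * chiF R (x + m) = -1.
Proof.
move=> m0.
have inj : injective (fun x : 'F_p => 1 + m * x^-1).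
  by move=> a b /addrI /(mulfI m0) /invr_inj.
have e : forall x : 'F_p, chiF R x * chiF R (x + m) =
   chiF R (1 + m * x^-1) - (x == 0)%:R.
  move=> x; case: (boolP (x == 0)) => [/eqP ->|x0].
    by rewrite chiF0 mul0r invr0 mulr0 addr0 chiF1 // subrr.
  rewrite subr0 (_ : x + m = x * (1 + m * x^-1)); last first.
    by rewrite mulrDr mulr1 mulrCA mulfV // mulr1.
  by rewrite chiF_mul // mulrA chiF_sq // mul1r.
rewrite (eq_bigr _ (fun x _ => e x)) sumrB.
have -> : \sum_(x : 'F_p) chiF R (1 + m * x^-1) = \sum_(x : 'F_p) chiF R x.
  by rewrite [RHS](reindex_inj inj).
rewrite sum_chiF // sub0r.
by rewrite (bigD1 0) //= ?eqxx big1 ?addr0 // => x /negPf ->.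
Qed.

Lemma sum_Ip_Fp (R : realType) (p : nat) (hp : prime p) (f : 'F_p -> R[i]) :
  \sum_(k < p) f (k%:R) = \sum_(x : 'F_p) f x.
Proof.
rewrite [RHS](eq_bigr (fun x : 'F_p => f ((val x)%:R))) => [|x _]; last by rewrite natr_Zp.
rewrite -(big_mkord xpredT (fun i : nat => f i%:R)).
rewrite -(big_mkord xpredT (fun i : nat => f i%:R)).
move: (fun i : nat => f i%:R) => g.
by rewrite Fp_cast.
Qed.

Lemma sum_shift (R : realType) (p : nat) (m : 'F_p) (g : 'F_p -> R[i]) :
  \sum_(x : 'F_p) g (x + m) = \sum_(x : 'F_p) g x.
Proof. by rewrite [RHS](reindex_inj (addIr m)). Qed.

Lemma overlap_F (R : realType) (p : nat) (hp : prime p) (hp4 : (p %% 4 = 3)%N)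
  (al be de : R[i]) (m : 'F_p) (m0 : m != 0) (hbe : be^* = be) :
  \sum_(x : 'F_p) ((al + be * chiF R x + (x == 0)%:R * de)^* *
                   (al + be * chiF R (x + m) + (x + m == 0)%:R * de))
  = p%:R * (al^* * al) - be * be + de^* * (al + be * chiF R m)
    + (al + be * chiF R (- m))^* * de.
Proof.
have cW : forall x : 'F_p, (al + be * chiF R x)^* = al^* + be * chiF R x.
  by move=> x; rewrite rmorphD rmorphM /= hbe chiF_conj.
set W := fun x : 'F_p => al + be * chiF R x.
rewrite (eq_bigr (fun x : 'F_p =>
   al^* * al + al^* * be * chiF R (x + m) + al * be * chiF R x
   + be * be * (chiF R x * chiF R (x + m))
   + (x == 0)%:R * (de^* * W (x + m))
   + (x + m == 0)%:R * ((W x)^* * de)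
   + (x == 0)%:R * (x + m == 0)%:R * (de^* * de))); last first.
  move=> x _; rewrite /W !rmorphD !rmorphM /= !chiF_conj hbe !rmorph_nat; ring.
rewrite !big_split /=.
rewrite sumr_const card_Fp //.
rewrite -!mulr_sumr sum_shift (sum_chiF R hp hp4) sum_chiF_shift // !mulr0 !addr0.
rewrite (bigD1 0) //= ?eqxx ?mul1r add0r big1 ?addr0; last first.
  by move=> x /negPf ->; rewrite mul0r.
rewrite (bigD1 (-m)) //= addNr ?eqxx ?mul1r big1 ?addr0; last first.
  move=> x xm; rewrite (_ : (x + m == 0) = false) ?mul0r //.
  by apply/negbTE; apply: contra xm; rewrite addr_eq0.
rewrite big1 ?addr0; last first.
  move=> x _; case: (boolP (x == 0)) => [/eqP ->|_].
    by rewrite add0r (negPf m0) mulr0 mul0r.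
  by rewrite mul0r mul0r.
rewrite /W -mulr_natl; ring.
Qed.

Lemma chiF_pm (R : realType) (p : nat) (x : 'F_p) :
  x != 0 -> chiF R x = 1 \/ chiF R x = -1.
Proof. by rewrite /chiF => /negPf ->; case: ifP => _; [left|right]. Qed.

Unset Implicit Arguments.
Local Open Scope complex_scope.

Theorem proposition2 (R : realType) (p : nat) (hp : prime p) (hp4 : (p %% 4 = 3)%N)
  (s : R[i]) (hs2 : s ^+ 2 = - 2 - sqrtC (p.+1)%:R) (hsre : 'Re s = 0) :
  exists x1 : R[i], `|x1| = 1 /\
    let v : 'I_p -> R[i] := fun k =>
      if (k == 0 :> nat) then s else if qres p k then x1 else - x1^-1 in
    forall j : 'I_p, (j != 0 :> nat) ->
      overlap v j = (sqrtC (p.+1)%:R + 1) * (v j) ^+ 2.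
Proof.
Local Close Scope complex_scope.
have [e2 hodd h0 p2] := p_odd_facts hp4.
pose rR : R := Num.sqrt ((p.+1)%:R).
have rR0 : 0 <= rR := sqrtr_ge0 _.
have rR2 : rR ^+ 2 = (p.+1)%:R by rewrite sqr_sqrtr // ler0n.
have rRge2 : 2 <= rR.
  have h4 : (4 <= (p.+1)%:R :> R) by rewrite (ler_nat R 4 p.+1).
  nra.
pose r : R[i] := rR%:C%C.
have hr : sqrtC ((p.+1)%:R : R[i]) = r.
  have := sqrCK (_ : 0 <= r); rewrite /r ler0c => /(_ rR0).
  by rewrite -rmorphXn rR2 rmorph_nat.
pose tR : R := complex.Im s.
pose t : R[i] := tR%:C%C.
have hs : s = 'i * t by rewrite [LHS]Crect hsre add0r /t /tR complexIm.
have htC : t ^+ 2 = 2 + r.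
  move: hs2; rewrite hs hr exprMn sqrCi mulN1r -opprD; exact: oppr_inj.
have htR : tR ^+ 2 = 2 + rR.
  apply: complexI; move: htC; rewrite /t -rmorphXn => ->.
  by rewrite rmorphD rmorph_nat.
pose chi2 := chiF R (2%:R : 'F_p).
have two0 : (2%:R : 'F_p) != 0 by apply: natF_neq0 => //; lia.
pose eR : R := if chi2 == 1 then - tR / rR else tR / (rR + 2).
have rRn0 : rR != 0 by apply/eqP => h; move: rRge2; rewrite h; lra.
have rR2n0 : rR + 2 != 0 by apply/eqP => h; move: rRge2; lra.
have hrel : (chi2 = 1 /\ eR * rR + tR = 0) \/ (chi2 = -1 /\ eR * (rR + 2) - tR = 0).
  rewrite /eR /chi2; case: (chiF_pm R two0) => ->; [left|right]; rewrite ?eqxx; split => //.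
    by rewrite divfK // addNr.
  rewrite (_ : (-1 == 1) = false); last by rewrite eqNr oner_eq0.
  by rewrite divfK // subrr.
have heR2 : eR ^+ 2 <= 1.
  case: hrel => [[_ h]|[_ h]].
    have h' : eR * rR = - tR by rewrite -(subr0 (eR * rR)) -h; ring.
    have h3 : eR ^+ 2 * rR ^+ 2 = 2 + rR by rewrite -exprMn h' sqrrN htR.
    rewrite -(@ler_pM2r _ (rR ^+ 2)) ?mul1r ?h3; [nra | apply: exprn_gt0; lra].
  have h' : eR * (rR + 2) = tR by rewrite -(subr0 (eR * (rR + 2))) -h; ring.
  have h3 : eR ^+ 2 * (rR + 2) ^+ 2 = 2 + rR by rewrite -exprMn h' htR.
  rewrite -(@ler_pM2r _ ((rR + 2) ^+ 2)) ?mul1r ?h3; [nra | apply: exprn_gt0; lra].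
pose cR : R := Num.sqrt (1 - eR ^+ 2).
have hcR : cR ^+ 2 + eR ^+ 2 = 1 by rewrite sqr_sqrtr ?subrK // subr_ge0.
pose c : R[i] := cR%:C%C.
pose e : R[i] := eR%:C%C.
have hce : c ^+ 2 + e ^+ 2 = 1 by rewrite /c /e -!rmorphXn -rmorphD hcR rmorph1.
have cc : c^* = c by exact: conjc_real.
have ce : e^* = e by exact: conjc_real.
have ct : t^* = t by exact: conjc_real.
have hi : 'i ^+ 2 = -1 :> R[i] := sqrCi _.
pose x1 : R[i] := c + 'i * e.
have hx1c : x1 * (c - 'i * e) = 1.
  rewrite -hce; apply: (@eq_trans _ _ (c ^+ 2 + e ^+ 2 - ('i ^+ 2 + 1) * e ^+ 2)).
    rewrite /x1; ring.
  by rewrite hi addNr mul0r subr0.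
have nx1 : x1 != 0 by apply/eqP => h; move: hx1c; rewrite h mul0r => /eqP; rewrite eq_sym oner_eq0.
have hx1inv : x1^-1 = c - 'i * e by apply: (mulfI nx1); rewrite mulfV // hx1c.
have x1conj : x1^* = c - 'i * e.
  by rewrite /x1 rmorphD rmorphM /= cc ce conjCi mulNr.
exists x1; split.
  have : `|x1| ^+ 2 == 1 by rewrite normCKC x1conj mulrC hx1c.
  by rewrite sqrp_eq1 ?normr_ge0 // => /eqP.
move=> v j j0.
pose m : 'F_p := (2 * j)%:R.
have jlt : (0 < j < p)%N by rewrite lt0n j0 ltn_ord.
have jF : (j%:R : 'F_p) != 0 by apply: natF_neq0.
have m0 : m != 0.
  rewrite /m -(dvdn_pcharf (pchar_Fp hp)) Euclid_dvdM //; apply/norP; split.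
    by apply/negP => /(dvdn_leq (isT : (0 < 2)%N)); rewrite leqNgt p2.
  apply/negP => /(dvdn_leq (_ : (0 < j)%N)) H.
  have : (0 < j)%N by case/andP: jlt.
  move/H; rewrite leqNgt ltn_ord //.
pose V (x : 'F_p) := 'i * e + c * chiF R x + (x == 0)%:R * (s - 'i * e).
have vV : forall k : 'I_p, v k = V (k%:R).
  move=> k; rewrite /v /V.
  case: (boolP (k == 0 :> nat)) => [/eqP k0 | k0].
    have -> : (k%:R : 'F_p) = 0 by rewrite k0.
    by rewrite chiF0 mulr0 addr0 eqxx mul1r addrC subrK.
  have kF : (k%:R : 'F_p) != 0 by apply: (natF_neq0 hp); rewrite lt0n k0 ltn_ord.
  rewrite (negPf kF) mul0r addr0 qres_F // kF /= /chiF (negPf kF).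
  case: ifP => _; first by rewrite mulr1 /x1 addrC.
  by rewrite hx1inv mulrN1 opprB addrC.
have hov : overlap v j = \sum_(x : 'F_p) (V x)^* * V (x + m).
  rewrite /overlap -(sum_Ip_Fp hp (fun x => (V x)^* * V (x + m))).
  apply: eq_bigr => k _; rewrite !vV; congr (_ * V _).
  by rewrite /= Fp_nat_mod // natrD.
have vj : v j = 'i * e + c * chiF R (j%:R : 'F_p).
  by rewrite vV /V (negPf jF) mul0r addr0.
have cmm : chiF R m = chi2 * chiF R (j%:R : 'F_p) by rewrite /m natrM chiF_mul.
have cm : chiF R (- m) = - (chi2 * chiF R (j%:R : 'F_p)).
  by rewrite -mulN1r chiF_mul // chiF_m1 // mulN1r cmm.
rewrite hov /V (@overlap_F R p hp hp4 _ _ _ m m0 cc) vj hr cm cmm.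
have E0 : chiF R (j%:R : 'F_p) * chiF R (j%:R : 'F_p) - 1 = 0 by rewrite chiF_sq // subrr.
have C1 := chiF_conj R (j%:R : 'F_p).
have C2 : chi2^* = chi2 := chiF_conj R _.
move: E0 C1; move: (chiF R (j%:R : 'F_p)) => eps E0 ceps.
have J0 : 'i ^+ 2 + 1 = 0 :> R[i] by rewrite hi addNr.
have Ht0 : t ^+ 2 - (r + 2) = 0 by rewrite htC; ring.
have Hp0 : r ^+ 2 - (p%:R + 1) = 0.
  by rewrite /r -rmorphXn rR2 rmorph_nat -addn1 natrD subrr.
have Hc0 : c ^+ 2 + e ^+ 2 - 1 = 0 by rewrite hce subrr.
rewrite hs !rmorphD !rmorphM !rmorphN /= conjCi ce ct cc.
rewrite !rmorphM /= conjCi ce ceps C2.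
apply: subr0_eq.
case: hrel => [[h2 H]|[h2 H]]; rewrite h2.
  have H0 : e * r + t = 0 by rewrite /e /r /t -rmorphM -rmorphD H rmorph0.
  apply: (@eq_trans _ _ (('i ^+ 2 + 1) * (- p%:R * e ^+ 2 + 2 * (e - t) * e - (r + 1) * e ^+ 2)
     - (r + 1) * c ^+ 2 * (eps * eps - 1) + ((r + 2) * e - t - 2 * 'i * c * eps) * (e * r + t)
     + (t ^+ 2 - (r + 2)) - e ^+ 2 * (r ^+ 2 - (p%:R + 1)) - (r + 2) * (c ^+ 2 + e ^+ 2 - 1))).
    ring.
  rewrite J0 E0 H0 Ht0 Hp0 Hc0; ring.
have H0 : e * (r + 2) - t = 0.
  have two : (2 : R[i]) = (2 : R)%:C%C by rewrite rmorph_nat.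
  by rewrite /e /r /t two -rmorphD -rmorphM -rmorphB H rmorph0.
apply: (@eq_trans _ _ (('i ^+ 2 + 1) * (- p%:R * e ^+ 2 + 2 * (e - t) * e - (r + 1) * e ^+ 2)
   - (r + 1) * c ^+ 2 * (eps * eps - 1) + (r * e + t - 2 * 'i * c * eps) * (e * (r + 2) - t)
   + (t ^+ 2 - (r + 2)) - e ^+ 2 * (r ^+ 2 - (p%:R + 1)) - (r + 2) * (c ^+ 2 + e ^+ 2 - 1))).
  ring.
rewrite J0 E0 H0 Ht0 Hp0 Hc0; ring.
Qed.
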